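(* Fix a real number $d$ with $0<d<1$ and let $c(x)=x^d$. For scheduling cost-sharing games with $n$ jobs and cost function $c$, the worst-case price of anarchy is $\Theta\!\left(n^{(1-d)/2}\right)$.
   Context: A game is specified by a cost function $c:\mathbb{Z}_{\ge 0}\to\mathbb{R}_{\ge0}$ (here $c(x)=x^d$, so $c(0)=0$), a time horizon $T$ with time slots $t=1,\dots,T$, and a set $J$ of $n$ jobs, each job $j$ having integer release time $r_j$ and integer deadline $d_j$ with $0<r_j<d_j<T$. An assignment $s$ gives each job $j$ a slot $s_j$ with $r_j\le s_j<d_j$ (the allowed interval $[r_j,d_j)$ of job $j$). The load of slot $t$ is $l_t(s)=|\{j: s_j=t\}|$ and the total cost is $C(s)=\sum_{t=1}^T c(l_t(s))$. Each job on slot $t$ pays the cost share $c(l_t(s))/l_t(s)$. An assignment $s$ is a Nash equilibrium (NE) if for every job $j$ and every slot $t\ne s_j$ with $t\in[r_j,d_j)$: $\frac{c(l_{s_j}(s))}{l_{s_j}(s)}\le \frac{c(l_t(s)+1)}{l_t(s)+1}$. The price of anarchy of a game is $\max_{s \text{ a NE}} C(s)/\min_{s^*} C(s^* )$, the minimum over all assignments; the worst-case price of anarchy for $n$ jobs is the supremum of this over all games with $n$ jobs. *)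

(* Defs.v *)
From Stdlib Require Import Reals Lra Lia List Arith.
Import ListNotations.
Open Scope R_scope.

Definition cost (d : R) (x : nat) : R :=
  if Nat.eqb x 0 then 0 else Rpower (INR x) d.

Definition share (d : R) (k : nat) : R := cost d k / INR k.

Record game := Game { horizon : nat; release : nat -> nat; deadline : nat -> nat }.

Definition valid_game (n : nat) (g : game) : Prop :=
  forall j, (j < n)%nat ->
    (0 < release g j)%nat /\ (release g j < deadline g j)%nat /\
    (deadline g j < horizon g)%nat.

Definition feasible (n : nat) (g : game) (s : nat -> nat) : Prop :=
  forall j, (j < n)%nat -> (release g j <= s j < deadline g j)%nat.

Definition load (n : nat) (s : nat -> nat) (t : nat) : nat :=
  length (filter (fun j => Nat.eqb (s j) t) (seq 0 n)).

Definition total_cost (d : R) (n : nat) (g : game) (s : nat -> nat) : R :=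
  fold_right Rplus 0 (map (fun t => cost d (load n s t)) (seq 1 (horizon g))).

Definition is_NE (d : R) (n : nat) (g : game) (s : nat -> nat) : Prop :=
  feasible n g s /\
  forall j t, (j < n)%nat -> t <> s j ->
    (release g j <= t < deadline g j)%nat ->
    share d (load n s (s j)) <= share d (load n s t + 1).

(* Main.v *)
Require Import Defs.
From Stdlib Require Import Reals Lra Lia List Arith.
Import ListNotations.
Open Scope R_scope.

Lemma exp_le_mono x y : x <= y -> exp x <= exp y.
Proof. intros [H|H]; [left; apply exp_increasing; auto | subst; lra]. Qed.

Lemma ln_le_mono x y : 0 < x -> x <= y -> ln x <= ln y.
Proof. intros Hx [H|H]; [left; apply ln_increasing; auto | subst; lra]. Qed.

Lemma ln_ge0 x : 1 <= x -> 0 <= ln x.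
Proof. intros H. rewrite <- ln_1. apply ln_le_mono; lra. Qed.

Lemma exp_conv a t : 0 < a < 1 -> exp (a * t) <= 1 + a * (exp t - 1).
Proof.
  intros Ha. set (s := a * t).
  assert (H1 : exp t = exp s * exp (t - s)) by (rewrite <- exp_plus; f_equal; lra).
  assert (H2 : 1 = exp s * exp (- s)) by (rewrite <- exp_plus; replace (s + - s) with 0 by lra; now rewrite exp_0).
  pose proof (exp_ineq1_le (t - s)). pose proof (exp_ineq1_le (- s)).
  pose proof (exp_pos s).
  assert (exp s * (1 + (t - s)) <= exp t) by (rewrite H1; apply Rmult_le_compat_l; lra).
  assert (exp s * (1 + - s) <= 1) by (rewrite H2 at 2; apply Rmult_le_compat_l; lra).
  assert (a * (exp s * (1 + (t - s))) + (1 - a) * (exp s * (1 + - s)) <= a * exp t + (1 - a) * 1) by nra.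
  unfold s in *. nra.
Qed.

Lemma tangent a x y : 0 < a < 1 -> 0 < x -> 0 < y ->
  Rpower y a <= Rpower x a + a * Rpower x (a - 1) * (y - x).
Proof.
  intros Ha Hx Hy. unfold Rpower.
  set (X := ln x). set (Y := ln y).
  assert (Ey : y = exp Y) by (unfold Y; now rewrite exp_ln).
  assert (Ex : x = exp X) by (unfold X; now rewrite exp_ln).
  assert (E1 : exp (a * Y) = exp (a * X) * exp (a * (Y - X))) by (rewrite <- exp_plus; f_equal; lra).
  assert (E2 : exp ((a - 1) * X) * y = exp (a * X) * exp (Y - X)) by (rewrite Ey, <- !exp_plus; f_equal; lra).
  assert (E3 : exp ((a - 1) * X) * x = exp (a * X)) by (rewrite Ex, <- !exp_plus; f_equal; lra).
  pose proof (exp_conv a (Y - X) Ha). pose proof (exp_pos (a * X)).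
  rewrite E1.
  replace (exp (a * X) + a * exp ((a - 1) * X) * (y - x)) with
    (exp (a * X) + a * (exp ((a - 1) * X) * y - exp ((a - 1) * X) * x)) by ring.
  rewrite E2, E3.
  replace (exp (a * X) + a * (exp (a * X) * exp (Y - X) - exp (a * X))) with
    (exp (a * X) * (1 + a * (exp (Y - X) - 1))) by ring.
  apply Rmult_le_compat_l; lra.
Qed.

Definition pw (x : nat) (a : R) : R := if Nat.eqb x 0 then 0 else Rpower (INR x) a.

Lemma Rpower_1_base a : Rpower 1 a = 1.
Proof. unfold Rpower. rewrite ln_1, Rmult_0_r. apply exp_0. Qed.

Lemma pw_step a m : 0 < a < 1 -> (1 <= m)%nat ->
  a * Rpower (INR m) (a - 1) <= pw m a - pw (m - 1) a.
Proof.
  intros Ha Hm. unfold pw.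
  destruct (Nat.eqb_spec m 0); [lia|].
  destruct (Nat.eqb_spec (m-1) 0).
  - assert (m = 1%nat) by lia. subst. simpl INR. rewrite !Rpower_1_base. lra.
  - pose proof (tangent a (INR m) (INR (m - 1)) Ha).
    rewrite minus_INR in * by lia. simpl INR in *.
    assert (1 < INR m). { apply lt_1_INR. lia. }
    assert (0 < INR m - 1). { assert (INR 1 < INR m) by (apply lt_INR; lia). simpl in *. lra. }
    specialize (H ltac:(lra) H1). lra.
Qed.

Lemma INR_pos k : (1 <= k)%nat -> 0 < INR k.
Proof. intros. apply lt_0_INR. lia. Qed.

Lemma share_eq d k : (1 <= k)%nat -> share d k = Rpower (INR k) (d - 1).
Proof.
  intros Hk. unfold share, cost. destruct (Nat.eqb_spec k 0); [lia|].
  pose proof (INR_pos k Hk).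
  unfold Rminus. rewrite Rpower_plus, Rpower_Ropp, Rpower_1 by lra.
  reflexivity.
Qed.

Lemma share_lt d k l : d < 1 -> (1 <= k)%nat -> (k < l)%nat -> share d l < share d k.
Proof.
  intros Hd Hk Hl. rewrite !share_eq by lia. unfold Rpower.
  apply exp_increasing.
  assert (ln (INR k) < ln (INR l)). { apply ln_increasing. apply INR_pos; lia. apply lt_INR; lia. }
  nra.
Qed.

Lemma share_le d k l : d < 1 -> (1 <= k)%nat -> (k <= l)%nat -> share d l <= share d k.
Proof.
  intros Hd Hk Hl. destruct (Nat.eq_dec k l). { subst; apply Rle_refl. } left; apply share_lt; [lra|lia|lia].
Qed.

Lemma share_le_inv d k l : d < 1 -> (1 <= k)%nat -> (1 <= l)%nat -> share d k <= share d l -> (l <= k)%nat.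
Proof.
  intros Hd Hk Hl H. destruct (le_lt_dec l k); auto.
  pose proof (share_lt d k l Hd Hk l0). exfalso; lra.
Qed.

Lemma share_bound d x m : 0 < d < 1 -> (1 <= x)%nat -> (1 <= m)%nat -> (m <= 3 * x * x)%nat ->
  share d x <= 3 * Rpower (INR m) ((1 + d) / 2 - 1).
Proof.
  intros Hd Hx Hm Hmx. rewrite share_eq by lia. unfold Rpower.
  pose proof (INR_pos x Hx). pose proof (INR_pos m Hm).
  assert (L : ln (INR m) <= ln 3 + 2 * ln (INR x)).
  { rewrite <- (ln_exp (ln 3 + 2 * ln (INR x))). apply ln_le_mono; auto.
    rewrite exp_plus, exp_ln by lra.
    replace (2 * ln (INR x)) with (ln (INR x) + ln (INR x)) by ring.
    rewrite exp_plus, exp_ln by lra.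
    apply le_INR in Hmx. rewrite !mult_INR in Hmx. simpl in Hmx. lra. }
  assert (L3 : 0 <= ln 3) by (apply ln_ge0; lra).
  assert (E : exp (- ln 3) = / 3) by (rewrite exp_Ropp, exp_ln; lra).
  assert (((1 + d) / 2 - 1) * ln (INR m) >= - ln 3 + (d - 1) * ln (INR x)) by nra.
  assert (exp (- ln 3 + (d - 1) * ln (INR x)) <= exp (((1 + d) / 2 - 1) * ln (INR m))) by (apply exp_le_mono; lra).
  rewrite exp_plus, E in H2. pose proof (exp_pos ((d - 1) * ln (INR x))). lra.
Qed.

Notation SUM l := (fold_right Rplus 0 l).

Lemma SUM_app l1 l2 : SUM (l1 ++ l2) = SUM l1 + SUM l2.
Proof. induction l1; simpl; lra. Qed.

Lemma SUM_le {A} (f g : A -> R) l : (forall x, In x l -> f x <= g x) -> SUM (map f l) <= SUM (map g l).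
Proof. induction l; simpl; intros H; [lra|]. pose proof (H a (or_introl eq_refl)). pose proof (IHl (fun x h => H x (or_intror h))). lra. Qed.

Lemma SUM_ext {A} (f g : A -> R) l : (forall x, In x l -> f x = g x) -> SUM (map f l) = SUM (map g l).
Proof. intros H. f_equal. apply map_ext_in. auto. Qed.

Lemma SUM_scale {A} c (f : A -> R) l : SUM (map (fun x => c * f x) l) = c * SUM (map f l).
Proof. induction l; simpl; [ring|]. rewrite IHl; ring. Qed.

Lemma SUM_plus {A} (f g : A -> R) l : SUM (map (fun x => f x + g x) l) = SUM (map f l) + SUM (map g l).
Proof. induction l; simpl; [ring|]. rewrite IHl; ring. Qed.

Lemma SUM_const {A} c (l : list A) : SUM (map (fun _ => c) l) = INR (length l) * c.
Proof. induction l; simpl length; [simpl; ring|]. rewrite S_INR. simpl. rewrite IHl. ring. Qed.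

Lemma SUM_nonneg {A} (f : A -> R) l : (forall x, In x l -> 0 <= f x) -> 0 <= SUM (map f l).
Proof. induction l; simpl; intros H; [lra|]. pose proof (H a (or_introl eq_refl)). pose proof (IHl (fun x h => H x (or_intror h))). lra. Qed.

Lemma len_filter_mono {A} (p q : A -> bool) l :
  (forall x, In x l -> p x = true -> q x = true) -> (length (filter p l) <= length (filter q l))%nat.
Proof.
  induction l; simpl; intros H; [lia|].
  specialize (IHl (fun x h => H x (or_intror h))).
  destruct (p a) eqn:E. rewrite (H a (or_introl eq_refl) E). simpl. lia.
  destruct (q a); simpl; lia.
Qed.

Lemma len_filter_split3 {A} (p q1 q2 q3 : A -> bool) l :
  (forall x, In x l -> p x = true -> q1 x = true \/ q2 x = true \/ q3 x = true) ->
  (length (filter p l) <= length (filter q1 l) + length (filter q2 l) + length (filter q3 l))%nat.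
Proof.
  induction l; simpl; intros H; [lia|].
  specialize (IHl (fun x h => H x (or_intror h))).
  destruct (p a) eqn:E.
  - destruct (H a (or_introl eq_refl) E) as [E1|[E1|E1]]; rewrite E1;
    destruct (q1 a), (q2 a), (q3 a); simpl; lia.
  - destruct (q1 a), (q2 a), (q3 a); simpl; lia.
Qed.

Lemma len_filter_pos {A} (p : A -> bool) l x : In x l -> p x = true -> (1 <= length (filter p l))%nat.
Proof.
  intros Hx Hp. destruct (filter p l) eqn:E. 
  - assert (In x (filter p l)) by (apply filter_In; auto). rewrite E in H. destruct H.
  - simpl; lia.
Qed.

Lemma len_filter_all {A} (p : A -> bool) l : (forall x, In x l -> p x = true) -> length (filter p l) = length l.
Proof. intros H. rewrite (forallb_filter_id p l); auto. apply forallb_forall. auto. Qed.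

Lemma len_filter_none {A} (p : A -> bool) l : (forall x, In x l -> p x = false) -> length (filter p l) = 0%nat.
Proof. induction l; simpl; intros H; auto. rewrite (H a (or_introl eq_refl)). apply IHl. auto. Qed.

Lemma filter_filter' {A} (p q : A -> bool) l : filter p (filter q l) = filter (fun x => andb (q x) (p x)) l.
Proof. induction l; simpl; auto. destruct (q a); simpl; [destruct (p a)|]; simpl; rewrite ?IHl; auto. Qed.

Lemma list_max_ex (l : list nat) : l <> [] -> exists x, In x l /\ forall y, In y l -> (y <= x)%nat.
Proof.
  induction l as [|a l IH]; intros H; [congruence|].
  destruct l as [|b l'].
  - exists a. simpl. split; auto. intros y [->|[]]; lia.
  - destruct (IH ltac:(discriminate)) as [x [Hx Hm]].
    destruct (le_lt_dec a x).
    + exists x. split; [right; auto|]. intros y [->|Hy]; auto.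
    + exists a. split; [left; auto|]. intros y [->|Hy]; [lia|]. specialize (Hm y Hy). lia.
Qed.

Section LB.
Variable d : R.
Hypothesis hd : 0 < d < 1.

Lemma lemmaB : forall m (l : list nat), length l = m ->
  (forall x, In x l -> (1 <= x)%nat /\ (length (filter (fun y => Nat.leb y x) l) <= 3 * x * x)%nat) ->
  SUM (map (share d) l) <= 6 * pw (length l) ((1 + d) / 2).
Proof.
  induction m; intros l Hl H.
  - destruct l; [|discriminate]. simpl. unfold pw. simpl. lra.
  - destruct (list_max_ex l) as [x [Hx Hm]]. { intros ->; discriminate. }
    destruct (in_split x l Hx) as [l1 [l2 E]].
    assert (Hl' : length (l1 ++ l2) = m) by (subst l; rewrite length_app in *; simpl in Hl; lia).
    assert (IHm' := IHm (l1 ++ l2) Hl').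
    assert (SUM (map (share d) (l1 ++ l2)) <= 6 * pw (length (l1 ++ l2)) ((1 + d) / 2)).
    { apply IHm'. intros y Hy.
      assert (Hyl : In y l) by (subst l; apply in_app_or in Hy; apply in_or_app; simpl; tauto).
      destruct (H y Hyl) as [H1 H2]. split; auto.
      refine (Nat.le_trans _ _ _ _ H2). subst l. rewrite !filter_app, !length_app. simpl.
      destruct (Nat.leb x y); simpl; lia. }
    assert (Hsum : SUM (map (share d) l) = share d x + SUM (map (share d) (l1 ++ l2))).
    { subst l. rewrite !map_app, !SUM_app. simpl. lra. }
    destruct (H x Hx) as [Hx1 Hx2].
    rewrite len_filter_all in Hx2 by (intros y Hy; apply Nat.leb_le; auto).
    pose proof (share_bound d x (length l) hd Hx1 ltac:(lia) Hx2).
    pose proof (pw_step ((1 + d) / 2) (length l) ltac:(lra) ltac:(lia)).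
    rewrite Hl' in *. rewrite Hl in *. replace (S m - 1)%nat with m in * by lia.
    assert (0 <= Rpower (INR (S m)) ((1 + d) / 2 - 1)) by (unfold Rpower; left; apply exp_pos).
    nra.
Qed.
End LB.

Lemma SUM_ind_none (v : nat) c U : ~ In v U -> SUM (map (fun u => if Nat.eqb v u then c else 0) U) = 0.
Proof.
  induction U; simpl; intros H; [lra|].
  destruct (Nat.eqb_spec v a); [exfalso; auto|]. rewrite IHU by tauto. lra.
Qed.

Lemma SUM_ind (v : nat) c U : NoDup U -> In v U -> SUM (map (fun u => if Nat.eqb v u then c else 0) U) = c.
Proof.
  induction U; simpl; intros Hn H; [destruct H|].
  inversion Hn; subst.
  destruct (Nat.eqb_spec v a).
  - subst. rewrite SUM_ind_none by auto. lra.
  - destruct H; [congruence|]. rewrite IHU by auto. lra.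
Qed.

Lemma regroup (o : nat -> nat) (g : nat -> R) J U : NoDup U -> (forall j, In j J -> In (o j) U) ->
  SUM (map g J) = SUM (map (fun u => SUM (map g (filter (fun j => Nat.eqb (o j) u) J))) U).
Proof.
  intros HU. induction J as [|j J IH]; intros HJ.
  - simpl. clear HJ HU. induction U; simpl; lra.
  - simpl map at 1. simpl fold_right at 1. rewrite IH by (intros; apply HJ; right; auto).
    rewrite (SUM_ext (fun u => SUM (map g (filter (fun j0 => Nat.eqb (o j0) u) (j :: J))))
      (fun u => (if Nat.eqb (o j) u then g j else 0) + SUM (map g (filter (fun j0 => Nat.eqb (o j0) u) J)))).
    + rewrite SUM_plus, SUM_ind; [lra|assumption|apply HJ; left; auto].
    + intros u _. simpl. destruct (Nat.eqb (o j) u); simpl; lra.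
Qed.

Lemma cost_share d k : INR k * share d k = cost d k.
Proof.
  unfold share. destruct (Nat.eq_dec k 0).
  - subst. simpl. unfold cost. simpl. lra.
  - assert (0 < INR k) by (apply lt_0_INR; lia). field. lra.
Qed.

Lemma valid_in n g s j : valid_game n g -> feasible n g s -> (j < n)%nat -> In (s j) (seq 1 (horizon g)).
Proof.
  intros Hv Hf Hj. apply in_seq. specialize (Hv j Hj). specialize (Hf j Hj). lia.
Qed.

Lemma identity d n g s : valid_game n g -> feasible n g s ->
  total_cost d n g s = SUM (map (fun j => share d (load n s (s j))) (seq 0 n)).
Proof.
  intros Hv Hf. rewrite (regroup s _ (seq 0 n) (seq 1 (horizon g))).
  - unfold total_cost. apply SUM_ext. intros t _.
    rewrite (SUM_ext _ (fun _ => share d (load n s t))).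
    + rewrite SUM_const. apply eq_sym, cost_share.
    + intros j Hj. apply filter_In in Hj. destruct Hj as [_ Hj]. apply Nat.eqb_eq in Hj. now rewrite Hj.
  - apply seq_NoDup.
  - intros j Hj. apply in_seq in Hj. apply (valid_in n g s); auto; lia.
Qed.

Lemma fold_max_prop (s : nat -> nat) u F :
  (forall i, In i F -> (s i <= fold_right (fun i acc => Nat.max (s i) acc) u F)%nat) /\
  (u <= fold_right (fun i acc => Nat.max (s i) acc) u F)%nat /\
  (fold_right (fun i acc => Nat.max (s i) acc) u F = u \/
   exists i, In i F /\ s i = fold_right (fun i acc => Nat.max (s i) acc) u F).
Proof.
  induction F as [|a F [H1 [H2 H3]]]; simpl.
  - split; [tauto|]. split; auto.
  - set (v := fold_right (fun i acc => Nat.max (s i) acc) u F) in *.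
    split; [intros i [->|Hi]; [lia|specialize (H1 i Hi); lia]|]. split; [lia|].
    destruct (le_lt_dec (s a) v).
    + rewrite Nat.max_r by lia. destruct H3 as [H3|[i [Hi Ei]]]; [left; auto|right; exists i; auto].
    + rewrite Nat.max_l by lia. right. exists a. auto.
Qed.

Lemma fold_min_prop (s : nat -> nat) u F :
  (forall i, In i F -> (fold_right (fun i acc => Nat.min (s i) acc) u F <= s i)%nat) /\
  (fold_right (fun i acc => Nat.min (s i) acc) u F <= u)%nat /\
  (fold_right (fun i acc => Nat.min (s i) acc) u F = u \/
   exists i, In i F /\ s i = fold_right (fun i acc => Nat.min (s i) acc) u F).
Proof.
  induction F as [|a F [H1 [H2 H3]]]; simpl.
  - split; [tauto|]. split; auto.
  - set (v := fold_right (fun i acc => Nat.min (s i) acc) u F) in *.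
    split; [intros i [->|Hi]; [lia|specialize (H1 i Hi); lia]|]. split; [lia|].
    destruct (le_lt_dec v (s a)).
    + rewrite Nat.min_r by lia. destruct H3 as [H3|[i [Hi Ei]]]; [left; auto|right; exists i; auto].
    + rewrite Nat.min_l by lia. right. exists a. auto.
Qed.

Lemma load_pos n s i : (i < n)%nat -> (1 <= load n s (s i))%nat.
Proof.
  intros Hi. unfold load. apply (len_filter_pos _ _ i). apply in_seq; lia. apply Nat.eqb_refl.
Qed.

Section Count.
Variables (d : R) (n : nat) (g : game) (s sopt : nat -> nat) (u : nat).
Hypothesis hd : 0 < d < 1.
Hypothesis Hne : is_NE d n g s.
Hypothesis Hopt : feasible n g sopt.

Definition P (b : nat) (i : nat) : bool := andb (Nat.eqb (sopt i) u) (Nat.leb (load n s (s i)) b).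

Lemma cover i i' : (i < n)%nat -> (i' < n)%nat -> sopt i' = u ->
  ((u <= s i < s i')%nat \/ (s i' < s i <= u)%nat) ->
  (load n s (s i) + 1 <= load n s (s i'))%nat.
Proof.
  intros Hi Hi' Ho Hb. destruct Hne as [Hf Hc].
  specialize (Hf i' Hi'). specialize (Hopt i' Hi').
  assert (H := Hc i' (s i) Hi' ltac:(lia) ltac:(lia)).
  apply share_le_inv in H; try lra; try lia.
  apply load_pos; auto.
Qed.

Lemma count_claim : forall b, (length (filter (P b) (seq 0 n)) <= 3 * b * b)%nat.
Proof.
  induction b.
  - rewrite len_filter_none; auto. intros i Hi. apply in_seq in Hi.
    unfold P. pose proof (load_pos n s i ltac:(lia)).
    destruct (Nat.leb_spec (load n s (s i)) 0); [lia|]. apply Bool.andb_false_r.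
  - set (F := filter (P (S b)) (seq 0 n)).
    set (vR := fold_right (fun i acc => Nat.max (s i) acc) u F).
    set (vL := fold_right (fun i acc => Nat.min (s i) acc) u F).
    destruct (fold_max_prop s u F) as [R1 [R2 R3]].
    destruct (fold_min_prop s u F) as [L1 [L2 L3]].
    fold vR in R1, R2, R3. fold vL in L1, L2, L3.
    assert (Hmem : forall i, In i F -> (i < n)%nat /\ sopt i = u /\ (load n s (s i) <= S b)%nat).
    { intros i Hi. unfold F in Hi. apply filter_In in Hi. destruct Hi as [Hi Hp].
      apply in_seq in Hi. unfold P in Hp. apply Bool.andb_true_iff in Hp. destruct Hp as [H1 H2].
      apply Nat.eqb_eq in H1. apply Nat.leb_le in H2. repeat split; auto; lia. }
    assert (Hsplit := len_filter_split3 (P (S b))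
      (fun i => andb (P (S b) i) (Nat.eqb (s i) vR))
      (fun i => andb (P (S b) i) (Nat.eqb (s i) vL)) (P b) (seq 0 n)).
    assert (Hv : forall v, (length (filter (fun i => andb (P (S b) i) (Nat.eqb (s i) v)) (seq 0 n)) <= S b)%nat).
    { intros v. destruct (filter (fun i => andb (P (S b) i) (Nat.eqb (s i) v)) (seq 0 n)) as [|i rest] eqn:E.
      - simpl; lia.
      - assert (Hi : In i (filter (fun i => andb (P (S b) i) (Nat.eqb (s i) v)) (seq 0 n))) by (rewrite E; left; auto).
        rewrite <- E. apply filter_In in Hi. destruct Hi as [Hi Hp].
        apply Bool.andb_true_iff in Hp. destruct Hp as [Hp Hs]. apply Nat.eqb_eq in Hs.
        assert (HiF : In i F) by (apply filter_In; auto).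
        destruct (Hmem i HiF) as [_ [_ Hl]].
        refine (Nat.le_trans _ (load n s v) _ _ _).
        + unfold load. apply len_filter_mono. intros x _ Hx. apply Bool.andb_true_iff in Hx. tauto.
        + rewrite <- Hs. auto. }
    refine (Nat.le_trans _ _ _ (Hsplit _) _).
    + intros i Hi Hp.
      destruct (Nat.eq_dec (s i) vR) as [e|ne]; [left; rewrite Hp, e, Nat.eqb_refl; auto|].
      destruct (Nat.eq_dec (s i) vL) as [e|ne']; [right; left; rewrite Hp, e, Nat.eqb_refl; auto|].
      right; right.
      assert (HiF : In i F) by (apply filter_In; auto).
      destruct (Hmem i HiF) as [Hin [Hou Hl]].
      specialize (R1 i HiF). specialize (L1 i HiF).
      assert (Hlt : (load n s (s i) + 1 <= S b)%nat).
      { destruct (le_lt_dec u (s i)).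
        - destruct R3 as [R3|[i' [Hi' Ei']]]; [lia|].
          destruct (Hmem i' Hi') as [Hin' [Hou' Hl']].
          pose proof (cover i i' Hin Hin' Hou' ltac:(lia)). lia.
        - destruct L3 as [L3|[i' [Hi' Ei']]]; [lia|].
          destruct (Hmem i' Hi') as [Hin' [Hou' Hl']].
          pose proof (cover i i' Hin Hin' Hou' ltac:(lia)). lia. }
      unfold P. apply Bool.andb_true_iff. split; [apply Nat.eqb_eq; auto|apply Nat.leb_le; lia].
    + pose proof (Hv vR). pose proof (Hv vL). lia.
Qed.
End Count.

Lemma pw_cost d m n : 0 < d < 1 -> (1 <= n)%nat -> (m <= n)%nat ->
  pw m ((1 + d) / 2) <= Rpower (INR n) ((1 - d) / 2) * cost d m.
Proof.
  intros Hd Hn Hm. unfold pw, cost. destruct (Nat.eqb_spec m 0); [lra|].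
  replace ((1 + d) / 2) with (d + (1 - d) / 2) by field.
  rewrite Rpower_plus.
  assert (0 < Rpower (INR m) d) by (unfold Rpower; apply exp_pos).
  assert (Rpower (INR m) ((1 - d) / 2) <= Rpower (INR n) ((1 - d) / 2)).
  { apply Rle_Rpower_l. lra. split. apply lt_0_INR; lia. apply le_INR; lia. }
  nra.
Qed.

Lemma upper d (hd : 0 < d < 1) n (Hn : (1 <= n)%nat) g s sopt :
  valid_game n g -> is_NE d n g s -> feasible n g sopt ->
  total_cost d n g s <= 6 * Rpower (INR n) ((1 - d) / 2) * total_cost d n g sopt.
Proof.
  intros Hv Hne Hopt.
  rewrite (identity d n g s Hv (proj1 Hne)).
  rewrite (regroup sopt _ (seq 0 n) (seq 1 (horizon g))).
  2: apply seq_NoDup.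
  2: { intros j Hj. apply in_seq in Hj. apply (valid_in n g sopt); auto; lia. }
  change (total_cost d n g sopt) with (SUM (map (fun t => cost d (load n sopt t)) (seq 1 (horizon g)))).
  rewrite <- SUM_scale. apply SUM_le. intros u _.
  set (F := filter (fun j => Nat.eqb (sopt j) u) (seq 0 n)).
  rewrite <- (map_map (fun j => load n s (s j)) (share d)).
  assert (HF : length F = load n sopt u) by reflexivity.
  assert (HFn : (length F <= n)%nat) by (unfold F; rewrite <- (length_seq n 0) at 2; apply filter_length_le).
  refine (Rle_trans _ (6 * pw (length (map (fun j => load n s (s j)) F)) ((1 + d) / 2)) _ _ _).
  - apply (lemmaB d hd _ _ eq_refl).
    intros x Hx. apply in_map_iff in Hx. destruct Hx as [i [Hix HiF]].
    assert (HiF' := HiF). unfold F in HiF'. apply filter_In in HiF'. destruct HiF' as [Hi _].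
    apply in_seq in Hi. split. subst x. apply load_pos. lia.
    rewrite filter_map_swap, length_map. unfold F. rewrite filter_filter'.
    apply (count_claim d n g s sopt u hd Hne Hopt x).
  - rewrite length_map, <- HF. pose proof (pw_cost d (length F) n hd Hn HFn). lra.
Qed.

Fixpoint tri (k : nat) : nat := match k with 0 => 0 | S k' => tri k' + S k' end%nat.

Fixpoint level (j : nat) : nat :=
  match j with
  | 0 => 1
  | S j' => if Nat.eqb (S j') (tri (level j')) then S (level j') else level j'
  end%nat.

Lemma tri_le a b : (a <= b)%nat -> (tri a <= tri b)%nat.
Proof. induction 1; simpl; lia. Qed.

Lemma tri2 k : (2 * tri k = k * (k + 1))%nat.
Proof. induction k; simpl; lia. Qed.

Lemma level_spec j : (1 <= level j)%nat /\ (tri (level j - 1) <= j < tri (level j))%nat.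
Proof.
  induction j as [|j [H1 [H2 H3]]]; [simpl; lia|].
  change (level (S j)) with (if Nat.eqb (S j) (tri (level j)) then S (level j) else level j).
  destruct (Nat.eqb_spec (S j) (tri (level j))).
  - replace (S (level j) - 1)%nat with (level j) by lia. simpl tri. lia.
  - lia.
Qed.

Lemma level_unique i j : (tri i <= j < tri (S i))%nat -> level j = S i.
Proof.
  intros H. destruct (level_spec j) as [H1 [H2 H3]].
  destruct (lt_eq_lt_dec (level j) (S i)) as [[Hl|Hl]|Hl]; auto.
  - pose proof (tri_le (level j) i ltac:(lia)). lia.
  - pose proof (tri_le (S i) (level j - 1) ltac:(lia)). lia.
Qed.

Lemma level_lt j k : (j < tri k)%nat -> (level j <= k)%nat.
Proof.
  intros H. destruct (level_spec j) as [H1 [H2 H3]].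
  destruct (le_lt_dec (level j) k); auto. pose proof (tri_le k (level j - 1) ltac:(lia)). lia.
Qed.

Lemma tri_ex n : exists k, (tri k <= n < tri (S k))%nat.
Proof.
  induction n. exists 0%nat; simpl; lia.
  destruct IHn as [k Hk]. destruct (Nat.eq_dec (S n) (tri (S k))).
  - exists (S k). simpl in *. lia.
  - exists k. simpl in *. lia.
Qed.

Lemma len_split (f : nat -> bool) a n : (a <= n)%nat ->
  length (filter f (seq 0 n)) = (length (filter f (seq 0 a)) + length (filter f (seq a (n - a))))%nat.
Proof.
  intros H. replace n with (a + (n - a))%nat at 1 by lia. rewrite seq_app, filter_app, length_app. reflexivity.
Qed.

Lemma level_count k t : (1 <= t <= k)%nat -> length (filter (fun j => Nat.eqb (level j) t) (seq 0 (tri k))) = t.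
Proof.
  revert t. induction k; intros t Ht; [lia|].
  simpl tri. rewrite seq_app, filter_app, length_app, Nat.add_0_l.
  assert (Hl2 : forall j, In j (seq (tri k) (S k)) -> level j = S k).
  { intros j Hj. apply in_seq in Hj. apply level_unique. simpl. lia. }
  destruct (Nat.eq_dec t (S k)).
  - subst. rewrite len_filter_none, len_filter_all, length_seq; auto.
    + intros j Hj. rewrite Hl2; auto. apply Nat.eqb_refl.
    + intros j Hj. apply in_seq in Hj. apply Nat.eqb_neq. pose proof (level_lt j k ltac:(lia)). lia.
  - rewrite IHk by lia. rewrite (len_filter_none _ (seq (tri k) (S k))); [lia|].
    intros j Hj. rewrite Hl2; auto. apply Nat.eqb_neq. lia.
Qed.

Section Lower.
Variables (d : R) (n k : nat).
Hypothesis hd : 0 < d < 1.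
Hypothesis Hk : (tri k <= n < tri (S k))%nat.
Hypothesis Hn : (1 <= n)%nat.

Lemma k_pos : (1 <= k)%nat.
Proof. destruct k; simpl in Hk; lia. Qed.

Definition gL : game := Game (k + 3) (fun j => if Nat.ltb j (tri k) then 1%nat else (k + 1)%nat)
  (fun j => if Nat.ltb j (tri k) then (level j + 1)%nat else (k + 2)%nat).
Definition sL (j : nat) : nat := if Nat.ltb j (tri k) then level j else (k + 1)%nat.
Definition oL (j : nat) : nat := if Nat.ltb j (tri k) then 1%nat else (k + 1)%nat.

Lemma load_sL_t t : (1 <= t <= k)%nat -> load n sL t = t.
Proof.
  intros Ht. unfold load. rewrite (len_split _ (tri k) n) by lia.
  rewrite (len_filter_none _ (seq (tri k) _)).
  - rewrite Nat.add_0_r. transitivity (length (filter (fun j => Nat.eqb (level j) t) (seq 0 (tri k)))); [|apply level_count; auto]. f_equal. apply filter_ext_in.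
    intros j Hj. apply in_seq in Hj. unfold sL. destruct (Nat.ltb_spec j (tri k)); [auto|lia].
  - intros j Hj. apply in_seq in Hj. unfold sL. destruct (Nat.ltb_spec j (tri k)); [lia|].
    apply Nat.eqb_neq. lia.
Qed.

Lemma load_sL_k : load n sL (k + 1) = (n - tri k)%nat.
Proof.
  unfold load. rewrite (len_split _ (tri k) n) by lia.
  rewrite (len_filter_none _ (seq 0 _)).
  - rewrite len_filter_all, length_seq; auto. intros j Hj. apply in_seq in Hj. unfold sL.
    destruct (Nat.ltb_spec j (tri k)); [lia|]. apply Nat.eqb_refl.
  - intros j Hj. apply in_seq in Hj. unfold sL. destruct (Nat.ltb_spec j (tri k)); [|lia].
    apply Nat.eqb_neq. pose proof (level_lt j k ltac:(lia)). lia.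
Qed.

Lemma load_oL_1 : load n oL 1 = tri k.
Proof.
  pose proof k_pos.
  unfold load. rewrite (len_split _ (tri k) n) by lia.
  rewrite (len_filter_none _ (seq (tri k) _)).
  - rewrite len_filter_all, length_seq; auto. intros j Hj. apply in_seq in Hj. unfold oL.
    destruct (Nat.ltb_spec j (tri k)); [|lia]. apply Nat.eqb_refl.
  - intros j Hj. apply in_seq in Hj. unfold oL. destruct (Nat.ltb_spec j (tri k)); [lia|].
    apply Nat.eqb_neq. lia.
Qed.

Lemma load_oL_k : load n oL (k + 1) = (n - tri k)%nat.
Proof.
  pose proof k_pos.
  unfold load. rewrite (len_split _ (tri k) n) by lia.
  rewrite (len_filter_none _ (seq 0 _)).
  - rewrite len_filter_all, length_seq; auto. intros j Hj. apply in_seq in Hj. unfold oL.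
    destruct (Nat.ltb_spec j (tri k)); [lia|]. apply Nat.eqb_refl.
  - intros j Hj. apply in_seq in Hj. unfold oL. destruct (Nat.ltb_spec j (tri k)); [|lia].
    apply Nat.eqb_neq. lia.
Qed.

Lemma validL : valid_game n gL.
Proof.
  intros j Hj. simpl. destruct (Nat.ltb_spec j (tri k)).
  - pose proof (level_lt j k H). pose proof (level_spec j). lia.
  - lia.
Qed.

Lemma feasL : feasible n gL sL.
Proof.
  intros j Hj. simpl. unfold sL. destruct (Nat.ltb_spec j (tri k)); [|lia].
  pose proof (level_spec j). lia.
Qed.

Lemma feasO : feasible n gL oL.
Proof.
  intros j Hj. simpl. unfold oL. destruct (Nat.ltb_spec j (tri k)); [|lia].
  pose proof (level_spec j). lia.
Qed.

Lemma neL : is_NE d n gL sL.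
Proof.
  split; [apply feasL|]. intros j t Hj Ht Hr. simpl in Hr. unfold sL in *.
  destruct (Nat.ltb_spec j (tri k)); [|lia].
  pose proof (level_spec j). pose proof (level_lt j k H).
  rewrite !load_sL_t by lia. apply share_le; [lra|lia|lia].
Qed.

Lemma loads_bound j : (j < n)%nat -> (1 <= load n sL (sL j) <= k)%nat.
Proof.
  intros Hj. destruct (Nat.ltb_spec j (tri k)).
  - replace (sL j) with (level j) by (unfold sL; rewrite (proj2 (Nat.ltb_lt _ _) H); auto).
    pose proof (level_spec j). pose proof (level_lt j k H). rewrite load_sL_t by lia. lia.
  - replace (sL j) with (k + 1)%nat by (unfold sL; rewrite (proj2 (Nat.ltb_ge _ _) H); auto).
    rewrite load_sL_k. simpl in Hk. lia.
Qed.

Lemma ne_cost_lb : INR n * share d k <= total_cost d n gL sL.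
Proof.
  rewrite (identity d n gL sL validL feasL).
  rewrite <- (length_seq n 0) at 1. rewrite <- SUM_const.
  apply SUM_le. intros j Hj. apply in_seq in Hj. pose proof (loads_bound j ltac:(lia)).
  apply share_le; [lra|lia|lia].
Qed.

Lemma cost_le x : (x <= n)%nat -> cost d x <= Rpower (INR n) d.
Proof.
  intros H. unfold cost. destruct (Nat.eqb_spec x 0).
  - unfold Rpower. left; apply exp_pos.
  - apply Rle_Rpower_l. lra. split. apply lt_0_INR; lia. apply le_INR; lia.
Qed.

Lemma opt_cost_ub : total_cost d n gL oL <= 2 * Rpower (INR n) d.
Proof.
  rewrite (identity d n gL oL validL feasO).
  replace (seq 0 n) with (seq 0 (tri k) ++ seq (tri k) (n - tri k)).
  2: { change (seq (tri k) (n - tri k)) with (seq (0 + tri k) (n - tri k)). rewrite <- seq_app. f_equal. lia. }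
  rewrite map_app, SUM_app.
  rewrite (SUM_ext _ (fun _ => share d (tri k)) (seq 0 (tri k))).
  rewrite (SUM_ext _ (fun _ => share d (n - tri k)) (seq (tri k) _)).
  - rewrite !SUM_const, !length_seq, !cost_share.
    pose proof (cost_le (tri k) ltac:(lia)). pose proof (cost_le (n - tri k) ltac:(lia)). lra.
  - intros j Hj. apply in_seq in Hj. unfold oL. destruct (Nat.ltb_spec j (tri k)); [lia|].
    fold oL. now rewrite load_oL_k.
  - intros j Hj. apply in_seq in Hj. unfold oL. destruct (Nat.ltb_spec j (tri k)); [|lia].
    fold oL. now rewrite load_oL_1.
Qed.

Lemma lower_final : / 4 * Rpower (INR n) ((1 - d) / 2) * total_cost d n gL oL <= total_cost d n gL sL.
Proof.
  pose proof k_pos.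
  pose proof ne_cost_lb. pose proof opt_cost_ub.
  assert (P0 : 0 <= Rpower (INR n) ((1 - d) / 2)) by (unfold Rpower; left; apply exp_pos).
  refine (Rle_trans _ (/ 4 * Rpower (INR n) ((1 - d) / 2) * (2 * Rpower (INR n) d)) _ _ _).
  { apply Rmult_le_compat_l; [lra|auto]. }
  refine (Rle_trans _ _ _ _ H0).
  rewrite share_eq by lia.
  assert (Hn0 : 0 < INR n) by (apply lt_0_INR; lia).
  assert (Hk0 : 0 < INR k) by (apply lt_0_INR; lia).
  set (L := ln (INR n)). set (K := ln (INR k)).
  assert (HK : 2 * K <= ln 2 + L).
  { unfold K, L. rewrite <- ln_mult by lra.
    replace (2 * ln (INR k)) with (ln (INR k * INR k)) by (rewrite ln_mult by lra; ring).
    apply ln_le_mono. nra. pose proof (tri2 k). assert (k * k <= 2 * n)%nat by nia.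
    apply le_INR in H3. rewrite !mult_INR in H3. simpl in H3. lra. }
  assert (L2 : 0 <= ln 2) by (apply ln_ge0; lra).
  unfold Rpower. fold L K.
  replace (INR n) with (exp L) at 1 by (unfold L; apply exp_ln; lra).
  replace (/ 4 * exp ((1 - d) / 2 * L) * (2 * exp (d * L))) with (exp (- ln 2 + ((1 + d) / 2) * L)).
  2: { rewrite !exp_plus, exp_Ropp, exp_ln by lra.
       replace ((1 + d) / 2 * L) with ((1 - d) / 2 * L + d * L) by field. rewrite exp_plus. field. }
  rewrite <- exp_plus. apply exp_le_mono.
  assert ((d - 1) * K >= (d - 1) * ((ln 2 + L) / 2)) by nra.
  nra.
Qed.
End Lower.

Theorem theorem1 (d : R) (hd : 0 < d < 1) :
  exists c1 c2 : R, 0 < c1 /\ 0 < c2 /\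
  exists N : nat, forall n : nat, (N <= n)%nat ->
    (forall (g : game) (s sopt : nat -> nat),
        valid_game n g -> is_NE d n g s -> feasible n g sopt ->
        total_cost d n g s <= c2 * Rpower (INR n) ((1 - d) / 2) * total_cost d n g sopt) /\
    (exists (g : game) (s sopt : nat -> nat),
        valid_game n g /\ is_NE d n g s /\ feasible n g sopt /\
        c1 * Rpower (INR n) ((1 - d) / 2) * total_cost d n g sopt <= total_cost d n g s).
Proof.
  exists (/ 4), 6. split; [lra|]. split; [lra|]. exists 1%nat. intros n Hn. split.
  - intros g s sopt Hv Hne Hf. apply upper; auto.
  - destruct (tri_ex n) as [k Hk].
    exists (gL k), (sL k), (oL k).
    split; [apply validL; auto|]. split; [apply neL; auto|]. split; [apply feasO; auto|].
    apply lower_final; auto.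
Qed.
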